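(* Let $A\in\mathbb{R}^{n\times n}$ be symmetric positive definite, $b\in\mathbb{R}^n$, and let the $CD$ method (described in the context) be applied to $Ay=b$ with starting point $y_0\in\mathbb{R}^n$ and real parameters $\gamma_k\neq 0$ for all $k\ge 0$. Let $k\ge 2$ be such that $p_k$ is generated by the method. Then for $0\le i\le k$, $$(Ap_k)^T(Ap_i)=\begin{cases}\|Ap_k\|^2, & i=k,\\[2pt] \dfrac{1}{\gamma_{k-1}}\,p_k^TAp_k, & i=k-1,\\[2pt] 0, & i\le k-2.\end{cases}$$
   Context: The $CD$ method for solving $Ay=b$, with $A$ symmetric positive definite, starting point $y_0\in\mathbb{R}^n$ and nonzero real parameters $\gamma_0,\gamma_1,\dots$, is the following iteration (all norms Euclidean). Set $r_0=b-Ay_0$; if $r_0=0$ stop; set $p_0=r_0$. For $k=0,1,2,\dots$: compute $a_k=\dfrac{r_k^Tp_k}{p_k^TAp_k}$, $y_{k+1}=y_k+a_kp_k$, $r_{k+1}=r_k-a_kAp_k$; if $r_{k+1}=0$ stop; otherwise set $\sigma_k=\gamma_k\dfrac{\|Ap_k\|^2}{p_k^TAp_k}$ and, if $k=0$, $p_1=\gamma_0Ap_0-\sigma_0p_0$, while if $k\ge1$, $\omega_k=\gamma_k\dfrac{(Ap_k)^T(Ap_{k-1})}{p_{k-1}^TAp_{k-1}}$ and $p_{k+1}=\gamma_kAp_k-\sigma_kp_k-\omega_kp_{k-1}$. *)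

(* Defs.v *)
From HB Require Import structures.
From mathcomp Require Import all_boot all_order all_algebra.
Set Implicit Arguments. Unset Strict Implicit. Unset Printing Implicit Defensive.
Import Order.TTheory GRing.Theory Num.Theory.
Local Open Scope ring_scope.

Definition dotv {R : realFieldType} {n : nat} (x y : 'cV[R]_n) : R :=
  (x^T *m y) 0 0.
Definition norm2 {R : realFieldType} {n : nat} (x : 'cV[R]_n) : R := dotv x x.

Definition spd {R : realFieldType} {n : nat} (A : 'M[R]_n) : Prop :=
  A^T = A /\ forall x : 'cV[R]_n, x != 0 -> 0 < dotv x (A *m x).

(* State of the CD method after k steps: (y_k, r_k, p_{k-1}, p_k);
   p_{-1} is set to 0 (never used).  Divisions are MathComp's total
   division; as long as the method is actually running the denominators
   are the ones of the paper. *)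
Fixpoint cd_state {R : realFieldType} {n : nat} (A : 'M[R]_n) (b y0 : 'cV[R]_n)
  (gamma : nat -> R) (k : nat) : 'cV[R]_n * 'cV[R]_n * 'cV[R]_n * 'cV[R]_n :=
  match k with
  | 0 => (y0, b - A *m y0, 0, b - A *m y0)
  | k'.+1 =>
      let '(y, r, pp, p) := cd_state A b y0 gamma k' in
      let a := dotv r p / dotv p (A *m p) in
      let y' := y + a *: p in
      let r' := r - a *: (A *m p) in
      let sigma := gamma k' * norm2 (A *m p) / dotv p (A *m p) in
      let p' :=
        if k' == 0%N then gamma 0%N *: (A *m p) - sigma *: p
        else
          let omega := gamma k' * dotv (A *m p) (A *m pp) / dotv pp (A *m pp) in
          gamma k' *: (A *m p) - sigma *: p - omega *: pp in
      (y', r', p, p')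
  end.

Definition cd_y {R : realFieldType} {n : nat} (A : 'M[R]_n) b y0 gamma k :=
  (cd_state A b y0 gamma k).1.1.1.
Definition cd_r {R : realFieldType} {n : nat} (A : 'M[R]_n) b y0 gamma k :=
  (cd_state A b y0 gamma k).1.1.2.
Definition cd_p {R : realFieldType} {n : nat} (A : 'M[R]_n) b y0 gamma k :=
  (cd_state A b y0 gamma k).2.

(* p_k is generated by the method iff it did not stop before, i.e.
   r_0, ..., r_k are all nonzero. *)
Definition cd_generated {R : realFieldType} {n : nat} (A : 'M[R]_n) b y0 gamma k :=
  forall j, (j <= k)%N -> cd_r A b y0 gamma j != 0.

(* Main.v *)
Require Import Defs.
From mathcomp Require Import all_boot all_order all_algebra.
Import Order.TTheory GRing.Theory Num.Theory.
Local Open Scope ring_scope.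

Lemma dotvC (R : realFieldType) n (x y : 'cV[R]_n) : dotv x y = dotv y x.
Proof.
have := congr1 (fun M : 'M[R]_1 => M 0 0) (trmx_mul x^T y).
by rewrite /dotv trmxK mxE => ->.
Qed.

Lemma dotvDr (R : realFieldType) n (x y z : 'cV[R]_n) : dotv x (y + z) = dotv x y + dotv x z.
Proof. by rewrite /dotv mulmxDr mxE. Qed.
Lemma dotvZr (R : realFieldType) n (x y : 'cV[R]_n) a : dotv x (a *: y) = a * dotv x y.
Proof. by rewrite /dotv -scalemxAr mxE. Qed.
Lemma dotvBr (R : realFieldType) n (x y z : 'cV[R]_n) : dotv x (y - z) = dotv x y - dotv x z.
Proof. by rewrite dotvDr -scaleN1r dotvZr mulN1r. Qed.
Lemma dotv0r (R : realFieldType) n (x : 'cV[R]_n) : dotv x 0 = 0.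
Proof. by rewrite /dotv mulmx0 mxE. Qed.
Lemma dotvA (R : realFieldType) n (A : 'M[R]_n) (x y : 'cV[R]_n) :
  A^T = A -> dotv x (A *m y) = dotv (A *m x) y.
Proof. by move=> hA; rewrite /dotv trmx_mul hA mulmxA. Qed.
Lemma Bsym (R : realFieldType) n (A : 'M[R]_n) (x y : 'cV[R]_n) :
  A^T = A -> dotv x (A *m y) = dotv y (A *m x).
Proof. by move=> hA; rewrite dotvA // dotvC. Qed.
Arguments dotvA {R n A x y}.
Arguments Bsym {R n A x y}.
Lemma cancel0 (R : realFieldType) (c x d : R) : (d = 0 -> x = 0) -> c * x / d * d = c * x.
Proof.
case: (eqVneq d 0) => [-> /(_ erefl) ->|hd _]; first by rewrite !mulr0.
by rewrite mulfVK.
Qed.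
Lemma spd0 (R : realFieldType) n (A : 'M[R]_n) (x : 'cV[R]_n) :
  spd A -> dotv x (A *m x) = 0 -> x = 0.
Proof.
move=> [_ h] e; apply/eqP; apply/negPn/negP => /h; by rewrite e ltxx.
Qed.

Arguments spd0 {R n A x}.
Definition cd_pm {R : realFieldType} {n : nat} (A : 'M[R]_n) b y0 gamma k :=
  (cd_state A b y0 gamma k).1.2.

Lemma pmS (R : realFieldType) n (A : 'M[R]_n) b y0 g j :
  cd_pm A b y0 g j.+1 = cd_p A b y0 g j.
Proof. by rewrite /cd_pm /cd_p /=; case: (cd_state _ _ _ _ j) => [[[y r] pp] p]. Qed.

Definition step {R : realFieldType} {n : nat} (A : 'M[R]_n) (gamma : nat -> R) (k' : nat)
  (s : 'cV[R]_n * 'cV[R]_n * 'cV[R]_n * 'cV[R]_n) :=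
      let '(y, r, pp, p) := s in
      let a := dotv r p / dotv p (A *m p) in
      let y' := y + a *: p in
      let r' := r - a *: (A *m p) in
      let sigma := gamma k' * norm2 (A *m p) / dotv p (A *m p) in
      let p' :=
        if k' == 0%N then gamma 0%N *: (A *m p) - sigma *: p
        else
          let omega := gamma k' * dotv (A *m p) (A *m pp) / dotv pp (A *m pp) in
          gamma k' *: (A *m p) - sigma *: p - omega *: pp in
      (y', r', p, p').

Lemma stateS (R : realFieldType) n (A : 'M[R]_n) b y0 g j :
  cd_state A b y0 g j.+1 = step A g j (cd_state A b y0 g j).
Proof. by []. Qed.

Lemma pS (R : realFieldType) n (A : 'M[R]_n) b y0 g j :
  cd_p A b y0 g j.+1 = g j *: (A *m cd_p A b y0 g j)
     - (g j * norm2 (A *m cd_p A b y0 g j) / dotv (cd_p A b y0 g j) (A *m cd_p A b y0 g j)) *: cd_p A b y0 g j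
     - (g j * dotv (A *m cd_p A b y0 g j) (A *m cd_pm A b y0 g j) / dotv (cd_pm A b y0 g j) (A *m cd_pm A b y0 g j)) *: cd_pm A b y0 g j.
Proof.
rewrite /cd_pm /cd_p; case: j => [|j]; first by rewrite /= scaler0 subr0.
rewrite (@stateS _ _ A b y0 g j.+1).
by case: (cd_state A b y0 g j.+1) => [[[y r] pp] p].
Qed.

Lemma Aexp (R : realFieldType) n (A : 'M[R]_n) b y0 g j : g j != 0 ->
  A *m cd_p A b y0 g j = (g j)^-1 *: (cd_p A b y0 g j.+1
     + (g j * norm2 (A *m cd_p A b y0 g j) / dotv (cd_p A b y0 g j) (A *m cd_p A b y0 g j)) *: cd_p A b y0 g j
     + (g j * dotv (A *m cd_p A b y0 g j) (A *m cd_pm A b y0 g j) / dotv (cd_pm A b y0 g j) (A *m cd_pm A b y0 g j)) *: cd_pm A b y0 g j).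
Proof.
move=> hg; rewrite pS addrAC subrK subrK scalerA mulVf // scale1r //.
Qed.

Lemma Bexp (R : realFieldType) n (A : 'M[R]_n) (x u v w : 'cV[R]_n) c s o :
  dotv x (A *m (c *: u - s *: v - o *: w)) =
  c * dotv x (A *m u) - s * dotv x (A *m v) - o * dotv x (A *m w).
Proof. by rewrite !mulmxDr !mulmxN !dotvDr -!scalemxAr -!scaleNr !dotvZr !mulNr. Qed.

Lemma Bexp2 (R : realFieldType) n (A : 'M[R]_n) (x u v w : 'cV[R]_n) c s o :
  dotv x (A *m (c *: (u + s *: v + o *: w))) =
  c * (dotv x (A *m u) + s * dotv x (A *m v) + o * dotv x (A *m w)).
Proof. by rewrite -scalemxAr dotvZr !mulmxDr !dotvDr -!scalemxAr !dotvZr. Qed.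

Lemma conjp (R : realFieldType) n (A : 'M[R]_n) b y0 g : spd A -> (forall j, g j != 0) ->
  forall m i, (i < m)%N -> dotv (cd_p A b y0 g i) (A *m cd_p A b y0 g m) = 0.
Proof.
move=> hA hg; case: (hA) => hT _.
elim/ltn_ind => m IH i.
case: m IH => [//|m] IH; rewrite ltnS => le_im.
have Im : forall x, (x < m)%N -> dotv (cd_p A b y0 g x) (A *m cd_p A b y0 g m) = 0.
  by apply: IH.
have Ipm : forall x, (x <= m)%N -> dotv (cd_p A b y0 g m) (A *m cd_pm A b y0 g x) = 0.
  case=> [_|x lx]; first by rewrite /cd_pm /= mulmx0 dotv0r.
  by rewrite pmS (Bsym hT) Im.
rewrite pS Bexp.
have [eim|nim] := eqVneq i m.
  rewrite eim Ipm // mulr0 subr0 (dotvA hT) -/(norm2 _) cancel0 ?subrr //.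
  by move/(spd0 hA) => ->; rewrite mulmx0 /norm2 dotv0r.
have lim : (i < m)%N by rewrite ltn_neqAle nim.
rewrite (Im i lim) mulr0 subr0.
case: m IH Im Ipm le_im nim lim => [//|m] IH Im Ipm le_im nim lim.
have [eim1|nim1] := eqVneq i m.
  rewrite eim1 pmS (dotvA hT) dotvC cancel0 ?subrr //.
  by move/(spd0 hA) => ->; rewrite mulmx0 dotv0r.
have lim1 : (i < m)%N by rewrite ltn_neqAle nim1 -ltnS.
rewrite pmS (IH m _ i lim1) ?ltnS // mulr0 subr0.
rewrite (dotvA hT) dotvC -(dotvA hT) (@Aexp _ _ A b y0 g i (hg i)).
rewrite -scalemxAr dotvZr !mulmxDr !dotvDr -!scalemxAr !dotvZr.
have Z : dotv (cd_pm A b y0 g i) (A *m cd_p A b y0 g m.+1) = 0.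
  case: (i) lim1 => [_|i' li]; first by rewrite dotvC /cd_pm /= dotv0r.
  by rewrite pmS Im // ltnS ltnW // ltnW.
rewrite !(@Bsym _ _ _ (cd_p A b y0 g m.+1) _ hT) Z (Im i) ?(Im i.+1) ?mulr0 ?addr0 ?mulr0 //.
Qed.

Arguments conjp {R n A b y0 g}.
Lemma pm_orth (R : realFieldType) n (A : 'M[R]_n) b y0 g : spd A -> (forall j, g j != 0) ->
  forall m j, (j <= m)%N -> dotv (cd_pm A b y0 g j) (A *m cd_p A b y0 g m) = 0.
Proof.
move=> hA hg m [_|j lj]; first by rewrite dotvC /cd_pm /= dotv0r.
by rewrite pmS (conjp hA hg).
Qed.

Arguments pm_orth {R n A b y0 g}.
Lemma dotvAp (R : realFieldType) n (A : 'M[R]_n) b y0 g : spd A -> (forall j, g j != 0) ->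
  forall m j, dotv (A *m cd_p A b y0 g m) (A *m cd_p A b y0 g j) =
  (g j)^-1 * (dotv (cd_p A b y0 g j.+1) (A *m cd_p A b y0 g m)
     + (g j * norm2 (A *m cd_p A b y0 g j) / dotv (cd_p A b y0 g j) (A *m cd_p A b y0 g j)) * dotv (cd_p A b y0 g j) (A *m cd_p A b y0 g m)
     + (g j * dotv (A *m cd_p A b y0 g j) (A *m cd_pm A b y0 g j) / dotv (cd_pm A b y0 g j) (A *m cd_pm A b y0 g j)) * dotv (cd_pm A b y0 g j) (A *m cd_p A b y0 g m)).
Proof.
move=> hA hg m j.
by rewrite [in LHS](@Aexp _ _ A b y0 g j (hg j)) dotvZr !dotvDr !dotvZr !(dotvC _ _ (A *m cd_p A b y0 g m)).
Qed.

Arguments dotvAp {R n A b y0 g}.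
Theorem lemma2 (R : realFieldType) (n : nat) (A : 'M[R]_n) (b y0 : 'cV[R]_n)
  (gamma : nat -> R) (k : nat) :
  spd A ->
  (forall j, gamma j != 0) ->
  (2 <= k)%N ->
  cd_generated A b y0 gamma k ->
  forall i, (i <= k)%N ->
    dotv (A *m cd_p A b y0 gamma k) (A *m cd_p A b y0 gamma i) =
      (if i == k then norm2 (A *m cd_p A b y0 gamma k)
       else if i == k.-1 then
         (gamma k.-1)^-1 * dotv (cd_p A b y0 gamma k) (A *m cd_p A b y0 gamma k)
       else 0).
Proof.
move=> hA hg hk _ i hi.
have [->|nik] := eqVneq i k; first by [].
have lik : (i < k)%N by rewrite ltn_neqAle nik.
case: k hk hi nik lik => [//|k] hk hi nik lik /=.
rewrite (dotvAp hA hg) (conjp hA hg k.+1 i lik) (pm_orth hA hg k.+1 i (ltnW lik)) !mulr0 !addr0.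
have [->|nik1] := eqVneq i k; first by [].
have lik1 : (i.+1 < k.+1)%N by rewrite ltnS ltn_neqAle nik1 -ltnS.
by rewrite (conjp hA hg k.+1 i.+1 lik1) mulr0.
Qed.
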